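(* Let $d\ge1$ and $t\ge1$ be integers, $M\ge1$, $f:[0,1]^d\to\mathbb{R}$ any function, and let $b$, $a_i$, $b_{r,i}$, $\hat g_i$ be as produced by the construction described in the context. Then: (a) for any $i\in\{0,\dots,(t+1)^d-1\}$ and $j\in\{1,\dots,(t+1)^d-1\}$, $\hat g_j(\boldsymbol\pi^i/t)=a_j/t$ if $\pi^j_r\le\pi^i_r$ for all $r\in\{1,\dots,d\}$, and $\hat g_j(\boldsymbol\pi^i/t)=0$ otherwise; (b) for every $i\in\{1,\dots,(t+1)^d-1\}$, $b+\sum_{j=1}^{i}\hat g_j(\boldsymbol\pi^i/t)=f(\boldsymbol\pi^i/t)$.
   Context: Let $\sigma(z)=\max(z,0)$ and $k=(t+1)^d$. For an integer $0\le i\le k-1$ let $\boldsymbol\pi^i=(\pi^i_1,\dots,\pi^i_d)$ be its base-$(t+1)$ digit vector, i.e. $0\le\pi^i_r\le t$ and $i=\sum_{r=1}^d\pi^i_r(t+1)^{d-r}$. For parameters $a_j,b_{1,j},\dots,b_{d,j}$ define $\hat g_j(\mathbf{x})=a_j\,\sigma\big(\sum_{r=1}^d -M\sigma(-x_r+b_{r,j})+\tfrac1t\big)$. Construction: set $b=f(\mathbf{0})$; for $i=1,\dots,k-1$ in order: let $\hat y=b+\sum_{j=1}^{i-1}\hat g_j(\boldsymbol\pi^i/t)$, set $b_{r,i}=\pi^i_r/t$ for $r=1,\dots,d$, and set $a_i=t\big(f(\boldsymbol\pi^i/t)-\hat y\big)$. *)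

(* Defs.v *)
From mathcomp Require Import all_boot all_order all_algebra.
Unset Printing Implicit Defensive.
Import Order.TTheory GRing.Theory Num.Theory.
Local Open Scope ring_scope.

Section Construction.
Variable R : realFieldType.

Definition relu (z : R) : R := Num.max z 0.

(* base-(t+1) digit vector of i; coordinate r : 'I_d stands for the paper's
   index r+1, so pi^i_{r+1} = (i / (t+1)^(d-(r+1))) mod (t+1). *)
Definition digit (t d i : nat) (r : 'I_d) : nat := modn (divn i (expn t.+1 (d - r.+1))) t.+1.

Definition grid (t d i : nat) : 'I_d -> R := fun r => (digit t d i r)%:R / t%:R.

Definition ghat (M : R) (t : nat) (d : nat) (a : R) (bj : 'I_d -> R) (x : 'I_d -> R) : R :=
  a * relu (\sum_(r < d) (- M * relu (- x r + bj r)) + t%:R^-1).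

(* coefs d f M t n'= [:: a_1; ...; a_n] produced by the first n steps of the
   construction (with b = f 0 and b_{r,j} = pi^j_r / t). *)
Fixpoint coefs (d : nat) (f : ('I_d -> R) -> R) (M : R) (t : nat) (n : nat) : seq R :=
  match n with
  | 0 => [::]
  | n'.+1 =>
      let s := coefs d f M t n' in
      let yhat := f (fun _ => 0) +
        \sum_(j < n') ghat M t d (nth 0 s j) (grid t d j.+1) (grid t d n'.+1) in
      rcons s (t%:R * (f (grid t d n'.+1) - yhat))
  end.
End Construction.

(* Main.v *)
Require Import Defs.
From mathcomp Require Import all_boot all_order all_algebra.
From mathcomp Require Import lra.
Import Order.TTheory GRing.Theory Num.Theory.
Local Open Scope ring_scope.

Section Helpers.
Variable R : realFieldType.
Variables (d t : nat) (M : R) (f : ('I_d -> R) -> R).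
Hypothesis ht : (1 <= t)%N.
Hypothesis hM : 1 <= M.

Lemma relu0 (z : R) : z <= 0 -> relu R z = 0.
Proof. by move=> h; rewrite /relu max_r. Qed.
Lemma reluid (z : R) : 0 <= z -> relu R z = z.
Proof. by move=> h; rewrite /relu max_l. Qed.
Lemma relu_ge (z : R) : z <= relu R z.
Proof. by rewrite /relu le_max lexx. Qed.
Lemma relu_ge0 (z : R) : 0 <= relu R z.
Proof. by rewrite /relu le_max lexx orbT. Qed.

Lemma tpos : 0 < (t%:R : R).
Proof. by rewrite ltr0n. Qed.

Lemma partA (a : R) (i j : nat) :
  ghat R M t d a (grid R t d j) (grid R t d i) =
  (if [forall r : 'I_d, (digit t d j r <= digit t d i r)%N]
   then a / t%:R else 0).
Proof.
have tp := tpos.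
rewrite /ghat /grid.
have E r : - ((digit t d i r)%:R / t%:R) + (digit t d j r)%:R / t%:R
   = ((digit t d j r)%:R - (digit t d i r)%:R) / (t%:R : R).
  by rewrite mulrBl addrC.
case: ifP => [/forallP H|/negbT].
  rewrite big1; last first.
    move=> r _; rewrite E relu0 ?mulr0 //.
    rewrite pmulr_lle0 ?invr_gt0 // subr_le0 ler_nat; exact: H.
  by rewrite add0r reluid ?invr_ge0 ?ler0n // mulrC -/(a / _) mulrC.
rewrite negb_forall => /existsP [r0]; rewrite -ltnNge => Hr.
rewrite relu0 ?mulr0 //.
rewrite (bigD1 r0) //=.
have H1 : \sum_(i0 < d | i0 != r0)
   (- M * relu R (- ((digit t d i i0)%:R / t%:R) + (digit t d j i0)%:R / t%:R)) <= 0.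
  apply: sumr_le0 => r _; rewrite mulNr oppr_le0; apply: mulr_ge0; [apply: le_trans hM; exact: ler01 | exact: relu_ge0].
have H2 : (t%:R)^-1 <= relu R (- ((digit t d i r0)%:R / t%:R) + (digit t d j r0)%:R / t%:R).
  apply: le_trans (relu_ge _); rewrite E -[X in X <= _]mul1r ler_pM2r ?invr_gt0 //.
  have : ((digit t d i r0).+1%:R : R) <= (digit t d j r0)%:R by rewrite ler_nat.
  rewrite -addn1 natrD; lra.
have H3 : 0 <= (t%:R : R)^-1 by rewrite invr_ge0 ler0n.
set u := relu R _ in H2 *; set s := \sum_(_ < d | _) _ in H1 *.
have H4 : u <= M * u.
  rewrite -subr_ge0 -[X in _ - X]mul1r -mulrBl; apply: mulr_ge0; [rewrite subr_ge0 // | exact: le_trans H3 H2].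
set mu := M * u in H4 *; rewrite mulNr -/mu; lra.
Qed.

Notation cf := (coefs R d f M t).

Lemma size_coefs n : size (cf n) = n.
Proof. by elim: n => //= n IH; rewrite size_rcons IH. Qed.

Lemma nth_coefs n m j : (j < n)%N -> (n <= m)%N -> nth 0 (cf m) j = nth 0 (cf n) j.
Proof.
move=> hj; elim: m => [|m IH]; first by rewrite leqn0 => /eqP E; move: hj; rewrite E.
rewrite leq_eqVlt => /orP [/eqP -> //|hn].
by rewrite /= nth_rcons size_coefs (leq_trans hj hn) IH.
Qed.

Lemma last_coef n : nth 0 (cf n.+1) n = t%:R * (f (grid R t d n.+1) -
   (f (fun _ => 0) + \sum_(j < n) ghat R M t d (nth 0 (cf n) j) (grid R t d j.+1) (grid R t d n.+1))).
Proof. by rewrite /= nth_rcons size_coefs ltnn eqxx. Qed.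

End Helpers.

Theorem propositionA5 (R : realFieldType) (d t : nat) (M : R)
    (f : ('I_d -> R) -> R) :
  (1 <= d)%N -> (1 <= t)%N -> 1 <= M ->
  let k := (t.+1 ^ d)%N in
  let b := f (fun _ => 0) in
  let a := fun j : nat => nth 0 (coefs R d f M t k.-1) j.-1 in
  let g := fun (j : nat) (x : 'I_d -> R) => ghat R M t d (a j) (grid R t d j) x in
  (forall i j : nat, (i < k)%N -> (1 <= j < k)%N ->
     g j (grid R t d i) =
       (if [forall r : 'I_d, (digit t d j r <= digit t d i r)%N]
        then a j / t%:R else 0)) /\
  (forall i : nat, (1 <= i < k)%N ->
     b + \sum_(1 <= j < i.+1) g j (grid R t d i) = f (grid R t d i)).
Proof.
move=> hd ht hM k b a g.
have PA : forall i j, g j (grid R t d i) =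
       (if [forall r : 'I_d, (digit t d j r <= digit t d i r)%N]
        then a j / t%:R else 0).
  by move=> i j; rewrite /g partA.
split; first by move=> i j _ _; exact: PA.
case=> [//|i] /andP [_ hi].
rewrite big_nat_recr //= PA.
have -> : [forall r : 'I_d, (digit t d i.+1 r <= digit t d i.+1 r)%N].
  by apply/forallP => r.
have hik : (i.+1 <= k.-1)%N by rewrite -ltnS prednK // (leq_ltn_trans _ hi).
have Ea : a i.+1 = nth 0 (coefs R d f M t i.+1) i by rewrite /a /= (nth_coefs _ _ _ _ _ _ _ _ (ltnSn i) hik).
rewrite Ea last_coef.
have -> : \sum_(1 <= j < i.+1) g j (grid R t d i.+1) =
   \sum_(j < i) ghat R M t d (nth 0 (coefs R d f M t i) j) (grid R t d j.+1) (grid R t d i.+1).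
  rewrite big_add1 /= big_mkord; apply: eq_bigr => j _.
  rewrite /g /a /= (nth_coefs _ _ _ _ _ _ _ _ (ltn_ord j) (ltnW hik)).
  by [].
rewrite /b.
have tn : (t%:R : R) != 0 by rewrite pnatr_eq0 -lt0n.
set S := \sum_(j < i) _.
rewrite mulrAC divff // mul1r.
by rewrite addrA addrC subrK.
Qed.
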